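(* Let $T$ be a TCD map on a minimal BTB graph $G$ and $H$ a hyperplane generic with respect to $T$. For an internal white vertex $w$ with black neighbours $b_1,\dots,b_m$ in counterclockwise order, let $w_i,w_i'$ be the other two neighbours of $b_i$ such that the counterclockwise order around $b_i$ is $w,w_i,w_i'$. Then, computing in the affine chart $\mathbb{CP}^d\setminus H$, $$Y_w=(-1)^{m+1}\,\mathrm{sr}\bigl(T(w);T(w_1),T(w_1'),\dots,T(w_m),T(w_m')\bigr)=-\prod_{i=1}^m\lambda\bigl(T(w_i),T(w_i'),T(w)\bigr).$$
   Context: A BTB graph is a planar bipartite graph (black $B$, white $W$) in a disk or cactus, with boundary white vertices on the boundary and every black vertex of degree $3$. It is minimal if zig-zag paths (turning maximally left at white and right at black vertices) are never closed, never traverse an edge twice, and no two both traverse two distinct edges $e_1$ then $e_2$. A TCD map is $T:W\to\mathbb{CP}^d$ such that the neighbours of each black vertex have pairwise distinct collinear images. $H=\mathbb P(\ker h)$ is generic if it contains no $T(w)$. A VRC in affine gauge with respect to $H$ consists of lifts $V(w)$ with $h(V(w))=1$ and edge weights with $\sum_{w\sim b}\mu(bw)V(w)=0$, so that $\sum_{w\sim b}\mu(bw)=0$. The affine cluster variable is $Y_w=(-1)^{m+1}\prod_{i=1}^m\mu(b_iw_i')/\mu(b_iw_i)$ in this gauge. $\lambda(P_1,P_2,P_3)=(P_1-P_3)/(P_2-P_3)$ for collinear points in an affine chart. The star-ratio of points $P,P_1,P_1',\dots,P_m,P_m'$ with $P$ on each line $P_iP_i'$ is $\mathrm{sr}(P;P_1,P_1',\dots,P_m,P_m')=\prod_i(P_i-P)/\prod_i(P-P_i')$.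 *)

(* Defs.v *)
From HB Require Import structures.
From mathcomp Require Import all_boot all_order all_algebra.
From mathcomp Require Import reals.
From mathcomp Require Export complex.
Set Implicit Arguments.
Unset Strict Implicit.
Unset Printing Implicit Defensive.
Import Order.TTheory GRing.Theory Num.Theory.
Local Open Scope ring_scope.

(* Edges are elements of [Ed]; every edge has a black end [bend] and a
   white end [wend].  [rotB e] is the edge following [e] in
   counterclockwise order around its black end, [rotW e] the edge
   following [e] counterclockwise around its white end.  [bdry] marks the
   boundary white vertices; for a boundary white vertex [w], [gap w] is
   the edge at [w] immediately counterclockwise after the boundary of the
   disk (cactus), i.e. the boundary passes through the corner at [w]
   between [finv rotW (gap w)] and [gap w]. *)
Record bgraph := BGraph {
  Wv : finType;
  Bv : finType;
  Ed : finType;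
  bend : Ed -> Bv;
  wend : Ed -> Wv;
  rotB : Ed -> Ed;
  rotW : Ed -> Ed;
  bdry : pred Wv;
  gap : Wv -> Ed
}.
Arguments bend : clear implicits.
Arguments wend : clear implicits.
Arguments rotB : clear implicits.
Arguments rotW : clear implicits.
Arguments bdry : clear implicits.
Arguments gap : clear implicits.

Section Graphs.
Variable G : bgraph.

(* face permutation of the hypermap (rotB, rotW) *)
Definition facep (e : Ed G) : Ed G := rotB G (rotW G e).

(* adjacency of edges sharing a vertex; its classes = connected components *)
Definition eadj : rel (Ed G) :=
  fun e e' => (e' == rotB G e) || (e' == rotW G e).

Definition ncomp : nat := n_comp eadj (Ed G).

Definition wdeg (w : Wv G) : nat := #|[set e | wend G e == w]|.

(* G is a planar bipartite graph embedded in a disk or cactus, with the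
   boundary white vertices on the boundary, all black vertices of degree 3 *)
Definition is_BTB : Prop :=
  [/\ injective (rotB G), injective (rotW G),
      [/\ 
      (forall e e', bend G e = bend G e' <-> fconnect (rotB G) e e'),
      (forall e e', wend G e = wend G e' <-> fconnect (rotW G) e e'),
      (forall b, #|[set e | bend G e == b]| = 3)
       & (forall w, bdry G w -> wend G (gap G w) = w)],
      (* genus 0 (Euler formula, for each connected component) *)
      fcard (rotB G) (Ed G) + fcard (rotW G) (Ed G) + fcard facep (Ed G)
        = #|Ed G| + 2 * ncomp
    & (* the boundary corners of each component lie on one common face *)
      (forall w w', bdry G w -> bdry G w' ->
         connect eadj (gap G w) (gap G w') ->
         fconnect facep (finv (rotW G) (gap G w)) (finv (rotW G) (gap G w')))].

(* A state is an edge together with the direction of traversal: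
   [true] = traversed from its black end to its white end. *)
Definition zstate := (Ed G * bool)%type.

(* one step: turn maximally left at a white vertex (clockwise neighbour),
   maximally right at a black vertex (counterclockwise neighbour); the path
   stops when turning would cross the boundary at a boundary white vertex *)
Definition zstep (s : zstate) : option zstate :=
  let: (e, toW) := s in
  if toW then
    (if bdry G (wend G e) && (e == gap G (wend G e)) then None
     else Some (finv (rotW G) e, false))
  else Some (rotB G e, true).

Fixpoint zit (n : nat) (s : zstate) : option zstate :=
  match n with
  | 0 => Some s
  | n'.+1 => match zit n' s with Some t => zstep t | None => None end
  end.

Definition minimal : Prop :=
  [/\ (* no closed zig-zag path *)
      (forall s n, zit n.+1 s <> Some s),
      (* no zig-zag path traverses an edge twice *)
      (forall s n t, zit n.+1 s = Some t -> t.1 <> s.1)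
    & (* no two distinct zig-zag paths both traverse e1 and then e2 <> e1 *)
      (forall (s1 s2 t1 t2 : zstate) n1 n2,
         (forall n, zit n s1 <> Some s2) -> (forall n, zit n s2 <> Some s1) ->
         s1.1 = s2.1 -> zit n1 s1 = Some t1 -> zit n2 s2 = Some t2 ->
         t1.1 <> s1.1 -> t1.1 <> t2.1)].

End Graphs.

(* Projective geometry in CP^d, points represented by nonzero vectors  *)
(* of C^(d+1) (row vectors); a hyperplane H = P(ker h), h a covector.  *)
Section Proj.
Variable R : realType.
Local Notation C := R[i].
Variable d : nat.

Definition hval (h : 'cV[C]_(d.+1)) (x : 'rV[C]_(d.+1)) : C := (x *m h) 0 0.

Definition pdistinct (u v : 'rV[C]_(d.+1)) : Prop := \rank (col_mx u v) = 2.

Definition pcollinear (u v x : 'rV[C]_(d.+1)) : Prop :=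
  (\rank (col_mx u (col_mx v x)) <= 2)%N.

(* T : W -> CP^d is a TCD map: the neighbours of each black vertex have
   pairwise distinct collinear images *)
Definition is_TCD (G : bgraph) (T : Wv G -> 'rV[C]_(d.+1)) : Prop :=
  (forall w, T w != 0) /\
  (forall e : Ed G,
     let u1 := T (wend G e) in
     let u2 := T (wend G (rotB G e)) in
     let u3 := T (wend G (rotB G (rotB G e))) in
     [/\ pdistinct u1 u2, pdistinct u2 u3, pdistinct u1 u3
       & pcollinear u1 u2 u3]).

Definition generic (G : bgraph) (h : 'cV[C]_(d.+1)) (T : Wv G -> 'rV[C]_(d.+1))
  : Prop := h != 0 /\ forall w, hval h (T w) != 0.

(* VRC in affine gauge w.r.t. H: lifts V(w) of T(w) with h(V(w)) = 1 and
   (nonzero) edge weights mu with sum_{w ~ b} mu(bw) V(w) = 0 *)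
Definition is_VRC_aff (G : bgraph) (T : Wv G -> 'rV[C]_(d.+1))
  (h : 'cV[C]_(d.+1)) (V : Wv G -> 'rV[C]_(d.+1)) (mu : Ed G -> C) : Prop :=
  [/\ (forall w, exists c : C, V w = c *: T w),
      (forall w, hval h (V w) = 1),
      (forall e, mu e != 0)
    & (forall b : Bv G, \sum_(e | bend G e == b) mu e *: V (wend G e) = 0)].

(* the point of the affine chart CP^d \ H represented by x *)
Definition aff (h : 'cV[C]_(d.+1)) (x : 'rV[C]_(d.+1)) : 'rV[C]_(d.+1) :=
  (hval h x)^-1 *: x.

(* u / v for parallel vectors u, v (v <> 0): the scalar k with u = k v *)
Definition vratio (u v : 'rV[C]_(d.+1)) : C :=
  if [pick j | v 0 j != 0] is Some j then u 0 j / v 0 j else 0.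

Definition lam (h : 'cV[C]_(d.+1)) (P1 P2 P3 : 'rV[C]_(d.+1)) : C :=
  vratio (aff h P1 - aff h P3) (aff h P2 - aff h P3).

Definition sr (h : 'cV[C]_(d.+1)) (m : nat) (P : 'rV[C]_(d.+1))
  (Ps Ps' : 'I_m -> 'rV[C]_(d.+1)) : C :=
  \prod_(i < m) vratio (aff h (Ps i) - aff h P) (aff h P - aff h (Ps' i)).

End Proj.

(* The affine cluster variable Y_w, for w = wend e0, with the black
   neighbours b_i = bend (e_i), e_i = rotW^i e0 (counterclockwise order),
   w_i = wend (rotB e_i), w_i' = wend (rotB (rotB e_i)):
   Y_w = (-1)^(m+1) prod_i mu(b_i w_i') / mu(b_i w_i). *)
Definition affY (R : realType) (G : bgraph) (mu : Ed G -> R[i]) (e0 : Ed G)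
  : R[i] :=
  let m := wdeg (wend G e0) in
  (-1) ^+ m.+1 *
  \prod_(i < m) (mu (rotB G (rotB G (iter i (rotW G) e0)))
                 / mu (rotB G (iter i (rotW G) e0))).

(* Main.v *)
Require Import Defs.
From HB Require Import structures.
From mathcomp Require Import all_boot all_order all_algebra.
From mathcomp Require Import reals complex.
From mathcomp Require Import ring.
Import GRing.Theory Num.Theory.
Local Open Scope ring_scope.

Section Helpers.
Variable R : realType.
Local Notation C := R[i].
Variable d : nat.

Lemma vratio_scale (u v : 'rV[C]_(d.+1)) (k : C) :
  v != 0 -> u = k *: v -> vratio u v = k.
Proof.
move=> vn0 ->; rewrite /vratio; case: pickP => [j Hj|H].
  by rewrite mxE mulfK.
case/eqP: vn0; apply/rowP => j; rewrite mxE.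
by move: (H j) => /negbFE/eqP.
Qed.

Lemma hvalZ (h : 'cV[C]_(d.+1)) (c : C) x : hval h (c *: x) = c * hval h x.
Proof. by rewrite /hval -scalemxAl mxE. Qed.

Lemma hvalD (h : 'cV[C]_(d.+1)) x y : hval h (x + y) = hval h x + hval h y.
Proof. by rewrite /hval mulmxDl mxE. Qed.

Lemma hval0 (h : 'cV[C]_(d.+1)) : hval h 0 = 0.
Proof. by rewrite /hval mul0mx mxE. Qed.

Lemma pdistinct_neq (u v : 'rV[C]_(d.+1)) k : pdistinct u v -> u != k *: v.
Proof.
rewrite /pdistinct => Hr; apply/eqP => Huv; move: Hr; rewrite Huv.
have : (\rank (col_mx (k *: v) v) <= \rank v)%N.
  by apply: mxrankS; rewrite col_mx_sub scalemx_sub ?submx_refl.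
move=> H1 H2; have := rank_leq_row v; rewrite H2 in H1.
by move=> H3; have := leq_trans H1 H3.
Qed.

End Helpers.

Theorem proposition7p18 (R : realType) (G : bgraph) (d : nat)
  (T : Wv G -> 'rV[R[i]]_(d.+1)) (h : 'cV[R[i]]_(d.+1))
  (V : Wv G -> 'rV[R[i]]_(d.+1)) (mu : Ed G -> R[i]) (e0 : Ed G) :
  is_BTB G -> minimal G -> is_TCD T -> generic h T ->
  is_VRC_aff T h V mu ->
  ~~ bdry G (wend G e0) ->
  let m := wdeg (wend G e0) in
  let Tw := T (wend G e0) in
  let Ti := fun i : 'I_m => T (wend G (rotB G (iter i (rotW G) e0))) in
  let Ti' := fun i : 'I_m => T (wend G (rotB G (rotB G (iter i (rotW G) e0)))) in
  affY mu e0 = (-1) ^+ m.+1 * sr h Tw Ti Ti' /\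
  (-1) ^+ m.+1 * sr h Tw Ti Ti' = - \prod_(i < m) lam h (Ti i) (Ti' i) Tw.
Proof.
move=> [injB injW [Hb Hw H3 _] _ _] _ [_ HT] _ [HVc HVh Hmu HVs] _ m Tw Ti Ti'.
have HVa : forall w, V w = aff h (T w).
  move=> w; case: (HVc w) => c Hc; have := HVh w; rewrite Hc hvalZ => H1.
  have hn0 : hval h (T w) != 0 by apply/eqP => H0; move: H1; rewrite H0 mulr0 => /eqP; rewrite eq_sym oner_eq0.
  rewrite /aff; congr (_ *: _); apply: (mulIf hn0); rewrite mulVf //.
have Hloc : forall E : Ed G,
  V (wend G (rotB G E)) - V (wend G E) =
  (mu (rotB G (rotB G E)) / mu (rotB G E)) *: (V (wend G E) - V (wend G (rotB G (rotB G E)))).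
  move=> E; have Hs := HVs (bend G E).
  have Hord : order (rotB G) E = 3%N.
    rewrite -[RHS](H3 (bend G E)); apply: eq_card => x; rewrite inE.
    apply/idP/eqP => [Hx|Hx]; last by apply (proj1 (Hb E x)).
    by symmetry; apply (proj2 (Hb E x)).
  rewrite (eq_bigl (fun x => x \in orbit (rotB G) E)) in Hs; last first.
    move=> x; rewrite -fconnect_orbit; apply/eqP/idP => Hx.
      by apply (proj1 (Hb E x)).
    by symmetry; apply (proj2 (Hb E x)).
  rewrite -big_uniq ?orbit_uniq // /orbit Hord /= !big_cons big_nil addr0 in Hs.
  have Hsum : mu E + mu (rotB G E) + mu (rotB G (rotB G E)) = 0.
    have := congr1 (hval h) Hs; rewrite !hvalD !hvalZ !HVh !mulr1 hval0 addrA.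
    by [].

  have hb := Hmu (rotB G E).
  apply/rowP => j; have := congr1 (fun M : 'rV__ => M 0 j) Hs.
  rewrite !mxE => Hj.
  have Ha : mu E = - mu (rotB G E) - mu (rotB G (rotB G E)).
    by apply/eqP; rewrite -subr_eq0 -Hsum; apply/eqP; ring.
  rewrite Ha in Hj; apply: (mulfI hb); rewrite mulrA mulrCA mulfV //.
  move: Hj; set a := V _ 0 j; set b := V _ 0 j; set c := V _ 0 j.
  move=> Hj; apply/eqP; rewrite -subr_eq0; apply/eqP; rewrite -Hj; ring.
have Hwi : forall i, wend G (iter i (rotW G) e0) = wend G e0.
  by move=> i; symmetry; apply/(Hw e0); apply: fconnect_iter.
have Hne : forall i, V (wend G e0) - V (wend G (rotB G (rotB G (iter i (rotW G) e0)))) != 0.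
  move=> i; rewrite subr_eq0; case: (HT (iter i (rotW G) e0)) => _ _ Hd _.
  rewrite Hwi in Hd; apply/eqP => Heq.
  case: (HVc (wend G e0)) => c Hc; case: (HVc (wend G (rotB G (rotB G (iter i (rotW G) e0))))) => c' Hc'.
  move: Heq; rewrite Hc Hc' => Heq.
  have cn0 : c != 0.
    by apply/eqP => c0; have := HVh (wend G e0); rewrite Hc c0 scale0r /hval mul0mx mxE => /eqP; rewrite eq_sym oner_eq0.
  have := @pdistinct_neq _ _ _ _ (c' / c) Hd.
  by rewrite [c' / c]mulrC -scalerA -Heq scalerA mulVf // scale1r eqxx.
have Hsr : sr h Tw Ti Ti' = \prod_(i < m) (mu (rotB G (rotB G (iter i (rotW G) e0))) / mu (rotB G (iter i (rotW G) e0))).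
  apply: eq_bigr => i _; rewrite /Tw /Ti /Ti' -!HVa.
  apply: vratio_scale; first exact: Hne.
  by have := Hloc (iter i (rotW G) e0); rewrite Hwi.
split; first by rewrite Hsr.
rewrite Hsr.
rewrite [in RHS](eq_bigr (fun i : 'I_m => - (mu (rotB G (rotB G (iter i (rotW G) e0))) / mu (rotB G (iter i (rotW G) e0))))); last first.
  move=> i _; rewrite /lam /Tw /Ti /Ti' /= -!HVa.
  apply: vratio_scale; first by rewrite -opprB oppr_eq0 Hne.
  by have := Hloc (iter i (rotW G) e0); rewrite Hwi => ->; rewrite scaleNr -scalerN opprB.
rewrite prodrN card_ord exprS mulN1r mulNr. by [].
Qed.
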